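(* Let $(\mathscr C,A,\psi)$ be an entwining structure. Then the category ${_A^{\mathscr C}}Ctr(\psi)$ of entwined contramodules over $(\mathscr C,A,\psi)$ has a set of generators.
   Context: $K$ is a field, $(U',U):=Hom_K(U',U)$. $\mathscr C$ is a coalgebra with several objects (objects $Ob(\mathscr C)$, vector spaces $\mathscr C(X,Y)$, coassociative counital maps $\delta_{XYZ}:\mathscr C(X,Z)\to\mathscr C(Y,Z)\otimes\mathscr C(X,Y)$, $\epsilon_X:\mathscr C(X,X)\to K$). $A$ is a $K$-algebra and $\psi=\{\psi_{XY}:\mathscr C(X,Y)\otimes A\to A\otimes\mathscr C(X,Y)\}$, $\psi(f\otimes a)=a_\psi\otimes f^\psi$, is an entwining: $a_\psi\otimes\delta_{XYZ}(f^\psi)=a_{\psi\psi}\otimes f_{Y1}^\psi\otimes f_{Y2}^\psi$, $(ab)_\psi\otimes f^\psi=a_\psi b_\psi\otimes f^{\psi\psi}$, $\psi(f\otimes1)=1\otimes f$, $a_\psi\epsilon_Z(g^\psi)=\epsilon_Z(g)a$. An entwined contramodule is a family of vector spaces $\mathcal M(X)$ with contramodule maps $\pi_{XY}:(\mathscr C(X,Y),\mathcal M(Y))\to\mathcal M(X)$ (satisfying $\pi_{XZ}\circ(\delta_{XYZ},\mathcal M(Z))=\pi_{XY}\circ(\mathscr C(X,Y),\pi_{YZ})$ and $\pi_{XX}\circ(\epsilon_X,\mathcal M(X))=id$) and left $A$-module structures $\mu_X:\mathcal M(X)\to(A,\mathcal M(X))$ with $\mu_X\circ\pi_{XY}=(A,\pi_{XY})\circ(\psi_{XY},\mathcal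 M(Y))\circ(\mathscr C(X,Y),\mu_Y)$ (via hom-tensor identifications); morphisms are objectwise $A$-linear maps compatible with the $\pi$'s. This category is ${_A^{\mathscr C}}Ctr(\psi)$. *)

(* Defs.v *)
From HB Require Import structures.
From mathcomp Require Import all_boot all_algebra.
Set Implicit Arguments. Unset Strict Implicit. Unset Printing Implicit Defensive.
Import GRing.Theory.
Local Open Scope ring_scope.

(* "Small" types: the universe of carriers of MathComp vector spaces
   (Type@{GRing.Lmodule.axioms_.u0}).  Sets (object sets of C, index sets of
   families of generators) are taken in this universe, so that the category of
   entwined contramodules (which lives one universe higher) is not small. *)
Definition SmallType :=
  ltac:(match type of @GRing.Lmodule.sort with forall (R : _), _ -> ?T => exact T end).

Section Defs.
Variable K : fieldType.

Definition bilinear2 (U V W : lmodType K) (b : U -> V -> W) : Prop :=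
  (forall (k : K) u1 u2 v, b (k *: u1 + u2) v = k *: b u1 v + b u2 v) /\
  (forall (k : K) u v1 v2, b u (k *: v1 + v2) = k *: b u v1 + b u v2).

Definition trilinear3 (U V Z W : lmodType K) (t : U -> V -> Z -> W) : Prop :=
  (forall (k : K) u1 u2 v z, t (k *: u1 + u2) v z = k *: t u1 v z + t u2 v z) /\
  (forall (k : K) u v1 v2 z, t u (k *: v1 + v2) z = k *: t u v1 z + t u v2 z) /\
  (forall (k : K) u v z1 z2, t u v (k *: z1 + z2) = k *: t u v z1 + t u v z2).

(* An element of U (x) V is represented by a finite list of simple tensors
   (Sweedler notation); it is tested against all bilinear maps out of U x V
   (universal property of the tensor product). *)
Definition tsum2 (U V W : lmodType K) (b : U -> V -> W) (s : seq (U * V)) : W :=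
  \sum_(p <- s) b p.1 p.2.

Definition tlinear (D U V : lmodType K) (d : D -> seq (U * V)) : Prop :=
  forall (W : lmodType K) (b : U -> V -> W), bilinear2 b ->
  forall (k : K) x1 x2, tsum2 b (d (k *: x1 + x2)) = k *: tsum2 b (d x1) + tsum2 b (d x2).

Definition tbilinear (U V V' U' : lmodType K) (d : U -> V -> seq (V' * U')) : Prop :=
  forall (W : lmodType K) (b : V' -> U' -> W), bilinear2 b ->
  bilinear2 (fun u v => tsum2 b (d u v)).

Record coalgebra := Coalgebra {
  cob : SmallType;
  chom : cob -> cob -> lmodType K;
  cdelta : forall X Y Z : cob, chom X Z -> seq (chom Y Z * chom X Y);
  ceps : forall X : cob, {scalar chom X X};
  cdelta_linear : forall X Y Z, tlinear (@cdelta X Y Z);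
  ccoassoc : forall (X Y Z V : cob) (W : lmodType K)
      (t : chom Z V -> chom Y Z -> chom X Y -> W), trilinear3 t ->
      forall f : chom X V,
      \sum_(p <- cdelta Y f) \sum_(q <- cdelta Z p.1) t q.1 q.2 p.2 =
      \sum_(p <- cdelta Z f) \sum_(q <- cdelta Y p.2) t p.1 q.1 q.2;
  ccounit_l : forall (X Y : cob) (f : chom X Y),
      \sum_(p <- cdelta Y f) ceps Y p.1 *: p.2 = f;
  ccounit_r : forall (X Y : cob) (f : chom X Y),
      \sum_(p <- cdelta X f) ceps X p.2 *: p.1 = f
}.

Arguments chom c X Y : clear implicits.
Arguments ceps c X : clear implicits.
Arguments cdelta {c X} Y {Z}.

Variable C : coalgebra.
Variable A : algType K.

Record entwining := Entwining {
  epsi : forall X Y : cob C, chom C X Y -> A -> seq (A * chom C X Y);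
  epsi_bilinear : forall X Y, tbilinear (@epsi X Y);
  epsi_delta : forall (X Y Z : cob C) (W : lmodType K)
      (t : A -> chom C Y Z -> chom C X Y -> W), trilinear3 t ->
      forall (f : chom C X Z) (a : A),
      \sum_(p <- epsi f a) \sum_(q <- cdelta Y p.2) t p.1 q.1 q.2 =
      \sum_(p <- cdelta Y f) \sum_(q <- epsi p.2 a) \sum_(r <- epsi p.1 q.1)
          t r.1 r.2 q.2;
  epsi_mul : forall (X Y : cob C) (W : lmodType K)
      (b : A -> chom C X Y -> W), bilinear2 b ->
      forall (f : chom C X Y) (a a' : A),
      tsum2 b (epsi f (a * a')) =
      \sum_(p <- epsi f a) \sum_(q <- epsi p.2 a') b (p.1 * q.1) q.2;
  epsi_one : forall (X Y : cob C) (W : lmodType K)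
      (b : A -> chom C X Y -> W), bilinear2 b ->
      forall f : chom C X Y, tsum2 b (epsi f 1) = b 1 f;
  epsi_eps : forall (Z : cob C) (g : chom C Z Z) (a : A),
      \sum_(p <- epsi g a) ceps C Z p.2 *: p.1 = ceps C Z g *: a
}.

Arguments epsi e {X Y} f a.

Variable psi : entwining.

Record ectr := ECtr {
  eM : cob C -> lmodType K;
  epi : forall X Y : cob C, {linear chom C X Y -> eM Y} -> eM X;
  eact : forall X : cob C, A -> eM X -> eM X;
  epi_linear : forall (X Y : cob C) (k : K) (phi1 phi2 phi3 : {linear chom C X Y -> eM Y}),
      (forall f, phi3 f = k *: phi1 f + phi2 f) ->
      epi phi3 = k *: epi phi1 + epi phi2;
  epi_assoc : forall (X Y Z : cob C)
      (sigma : chom C X Y -> {linear chom C Y Z -> eM Z})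
      (phi : {linear chom C X Z -> eM Z}) (rho : {linear chom C X Y -> eM Y}),
      (forall (k : K) h1 h2 g, sigma (k *: h1 + h2) g = k *: sigma h1 g + sigma h2 g) ->
      (forall f, phi f = \sum_(p <- cdelta Y f) sigma p.2 p.1) ->
      (forall h, rho h = epi (sigma h)) ->
      epi phi = epi rho;
  epi_counit : forall (X : cob C) (m : eM X) (phi : {linear chom C X X -> eM X}),
      (forall f, phi f = ceps C X f *: m) -> epi phi = m;
  eact_linl : forall X (k : K) (a1 a2 : A) (m : eM X),
      eact (k *: a1 + a2) m = k *: eact a1 m + eact a2 m;
  eact_linr : forall X (k : K) (a : A) (m1 m2 : eM X),
      eact a (k *: m1 + m2) = k *: eact a m1 + eact a m2;
  eact_one : forall X (m : eM X), eact 1 m = m;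
  eact_mul : forall X (a b : A) (m : eM X), eact (a * b) m = eact a (eact b m);
  epi_act : forall (X Y : cob C) (a : A) (phi phi' : {linear chom C X Y -> eM Y}),
      (forall f, phi' f = \sum_(p <- epsi psi f a) eact p.1 (phi p.2)) ->
      eact a (epi phi) = epi phi'
}.

Arguments eM e X : clear implicits.
Arguments epi {e X Y}.
Arguments eact {e X}.

Record ehom (M N : ectr) := EHom {
  emap : forall X : cob C, {linear eM M X -> eM N X};
  emap_act : forall X (a : A) (m : eM M X), emap X (eact a m) = eact a (emap X m);
  emap_pi : forall (X Y : cob C) (phi : {linear chom C X Y -> eM M Y})
      (phi' : {linear chom C X Y -> eM N Y}),
      (forall f, phi' f = emap Y (phi f)) ->
      emap X (epi phi) = epi phi'
}.

Arguments emap {M N} e X.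

Definition generating (I : Type) (G : I -> ectr) : Prop :=
  forall (M N : ectr) (u v : ehom M N),
    (forall (i : I) (h : ehom (G i) M) (X : cob C) (x : eM (G i) X),
        emap u X (emap h X x) = emap v X (emap h X x)) ->
    forall (X : cob C) (m : eM M X), emap u X m = emap v X m.

Definition has_set_of_generators : Prop :=
  exists (I : SmallType) (G : I -> ectr), generating G.

End Defs.

(* Main.v *)
From HB Require Import structures.
Require Import Defs.
From mathcomp Require Import all_boot all_algebra.
From mathcomp Require Import boolp.
Set Implicit Arguments. Unset Strict Implicit. Unset Printing Implicit Defensive.
Import GRing.Theory.
Local Open Scope ring_scope.

Section LFun.
Variables (K : fieldType) (U V : lmodType K).
Record lfun := LFun { lf :> U -> V; lf_lin : forall (k : K) x y, lf (k *: x + y) = k *: lf x + lf y }.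
Lemma lfP (f g : lfun) : lf f =1 lf g -> f = g.
Proof.
case: f g => f fl [g gl] /= /funext E; subst g; congr LFun; exact: Prop_irrelevance.
Qed.
HB.instance Definition _ := gen_eqMixin lfun.
HB.instance Definition _ := gen_choiceMixin lfun.
Lemma lf_add (f : lfun) x y : f (x + y) = f x + f y.
Proof. by rewrite -[x in LHS]scale1r lf_lin scale1r. Qed.
Lemma lf0 (f : lfun) : f 0 = 0.
Proof. by have := lf_add f 0 0; rewrite addr0 => /eqP; rewrite -subr_eq subrr eq_sym => /eqP. Qed.
Lemma lfZ (f : lfun) k x : f (k *: x) = k *: f x.
Proof. by rewrite -[_ *: x]addr0 lf_lin lf0 addr0. Qed.
Lemma lfN (f : lfun) x : f (- x) = - f x.
Proof. by rewrite -scaleN1r lfZ scaleN1r. Qed.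
Program Definition lzero : lfun := @LFun (fun _ => 0) _.
Next Obligation. by rewrite scaler0 addr0. Qed.
Program Definition ladd (f g : lfun) : lfun := @LFun (fun x => f x + g x) _.
Next Obligation. by rewrite !lf_lin scalerDr addrACA. Qed.
Program Definition lopp (f : lfun) : lfun := @LFun (fun x => - f x) _.
Next Obligation. by rewrite lf_lin opprD scalerN. Qed.
Program Definition lscale (c : K) (f : lfun) : lfun := @LFun (fun x => c *: f x) _.
Next Obligation. by rewrite lf_lin scalerDr !scalerA mulrC. Qed.
Lemma laddA : associative ladd. Proof. by move=> f g h; apply: lfP => x /=; rewrite addrA. Qed.
Lemma laddC : commutative ladd. Proof. by move=> f g; apply: lfP => x /=; rewrite addrC. Qed.
Lemma ladd0 : left_id lzero ladd. Proof. by move=> f; apply: lfP => x /=; rewrite add0r. Qed.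
Lemma laddN : left_inverse lzero lopp ladd. Proof. by move=> f; apply: lfP => x /=; rewrite addNr. Qed.
HB.instance Definition _ := GRing.isZmodule.Build lfun laddA laddC ladd0 laddN.
Lemma lscaleA a b (f : lfun) : lscale a (lscale b f) = lscale (a * b) f.
Proof. by apply: lfP => x /=; rewrite scalerA. Qed.
Lemma lscale1 : left_id 1 lscale. Proof. by move=> f; apply: lfP => x /=; rewrite scale1r. Qed.
Lemma lscaleDr : right_distributive lscale +%R. Proof. by move=> a f g; apply: lfP => x /=; rewrite scalerDr. Qed.
Lemma lscaleDl (f : lfun) : {morph lscale^~ f : a b / a + b}. Proof. by move=> a b; apply: lfP => x /=; rewrite scalerDl. Qed.
HB.instance Definition _ := GRing.Zmodule_isLmodule.Build K lfun lscaleA lscale1 lscaleDr lscaleDl.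
Lemma lfE_add (f g : lfun) x : (f + g) x = f x + g x. Proof. by []. Qed.
Lemma lfE_scale c (f : lfun) x : (c *: f) x = c *: f x. Proof. by []. Qed.
Lemma lfE_sum (I : Type) (r : seq I) (F : I -> lfun) x : (\sum_(i <- r) F i) x = \sum_(i <- r) F i x.
Proof. elim: r => [|i r IH]; by rewrite ?big_nil ?big_cons //= IH. Qed.
Lemma lf_sum (f : lfun) (I : Type) (r : seq I) (F : I -> U) : f (\sum_(i <- r) F i) = \sum_(i <- r) f (F i).
Proof. elim: r => [|i r IH]; by rewrite ?big_nil ?big_cons ?lf0 // lf_add IH. Qed.
End LFun.

Definition mkLin (K : fieldType) (U V : lmodType K) (f : U -> V)
  (H : forall (k : K) x y, f (k *: x + y) = k *: f x + f y) : {linear U -> V} :=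
  HB.pack f (GRing.isLinear.Build K U V *:%R f (fun a u v => H a u v)).
Lemma mkLinE (K : fieldType) (U V : lmodType K) f H x : @mkLin K U V f H x = f x.
Proof. by []. Qed.

Section Free.
Variables (K : fieldType) (C : coalgebra K) (A : algType K) (psi : entwining C A).

Lemma epi_ext (M : ectr psi) X Y (phi1 phi2 : {linear @chom K C X Y -> eM M Y}) :
  phi1 =1 phi2 -> epi phi1 = epi phi2.
Proof.
move=> E; rewrite (@epi_linear _ _ _ _ M X Y 0 phi1 phi2 phi1) ?scale0r ?add0r //.
by move=> f; rewrite scale0r add0r E.
Qed.

Lemma eact0 (M : ectr psi) X (m : eM M X) : eact 0 m = 0.
Proof.
have := @eact_linl _ _ _ _ M X 1 0 0 m; rewrite scale1r addr0 scale1r.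
move=> H; apply: (@addrI _ (eact 0 m)); rewrite addr0; exact: esym.
Qed.

Lemma eact_suml (M : ectr psi) X (m : eM M X) (I : Type) (r : seq I) (F : I -> A) :
  eact (\sum_(i <- r) F i) m = \sum_(i <- r) eact (F i) m.
Proof.
elim: r => [|i r IH]; first by rewrite !big_nil eact0.
by rewrite !big_cons -IH; have := @eact_linl _ _ _ _ M X 1 (F i) (\sum_(j <- r) F j) m; rewrite !scale1r.
Qed.

Variable W : cob C.
Definition F (Y : cob C) : lmodType K := lfun (@chom K C Y W) A.

Lemma bil_mul Y (phi : F Y) : bilinear2 (fun (a : A) (g : @chom K C Y W) => a * phi g).
Proof.
split=> k u1 u2 v; first by rewrite mulrDl scalerAl.
by rewrite lf_lin mulrDr scalerAr.
Qed.

Program Definition eactF Y (a : A) (phi : F Y) : F Y :=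
  @LFun _ _ _ (fun f => \sum_(p <- epsi psi f a) p.1 * phi p.2) _.
Next Obligation.
have [H _] := @epsi_bilinear _ _ _ psi Y W _ _ (bil_mul phi).
exact: H.
Qed.

Lemma bil_pi X Y (Phi : {linear @chom K C X Y -> F Y}) :
  bilinear2 (fun (g1 : @chom K C Y W) (g2 : @chom K C X Y) => Phi g2 g1).
Proof.
split=> k u1 u2 v; first by rewrite lf_lin.
by rewrite linearP.
Qed.

Program Definition piF X Y (Phi : {linear @chom K C X Y -> F Y}) : F X :=
  @LFun _ _ _ (fun f => \sum_(p <- cdelta Y f) Phi p.2 p.1) _.
Next Obligation.
exact: (@cdelta_linear _ C X Y W _ _ (bil_pi Phi)).
Qed.


Lemma F_lin X Y (k : K) (phi1 phi2 phi3 : {linear @chom K C X Y -> F Y}) :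
  (forall f, phi3 f = k *: phi1 f + phi2 f) -> piF phi3 = k *: piF phi1 + piF phi2.
Proof.
move=> H; apply: lfP => f /=.
under eq_bigr => p _ do rewrite H /=.
by rewrite big_split /= scaler_sumr.
Qed.

Lemma tri_assoc X Y Z (sigma : @chom K C X Y -> {linear @chom K C Y Z -> F Z}) :
  (forall (k : K) h1 h2 g, sigma (k *: h1 + h2) g = k *: sigma h1 g + sigma h2 g) ->
  trilinear3 (fun (c1 : @chom K C Z W) (c2 : @chom K C Y Z) (c3 : @chom K C X Y) => sigma c3 c2 c1).
Proof.
move=> Hs; split; [|split] => k u1 u2 v z.
- by rewrite lf_lin.
- by rewrite linearP lfE_add lfE_scale.
- by rewrite Hs lfE_add lfE_scale.
Qed.

Lemma F_assoc (X Y Z : cob C)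
      (sigma : @chom K C X Y -> {linear @chom K C Y Z -> F Z})
      (phi : {linear @chom K C X Z -> F Z}) (rho : {linear @chom K C X Y -> F Y}) :
      (forall (k : K) h1 h2 g, sigma (k *: h1 + h2) g = k *: sigma h1 g + sigma h2 g) ->
      (forall f, phi f = \sum_(p <- cdelta Y f) sigma p.2 p.1) ->
      (forall h, rho h = piF (sigma h)) ->
      piF phi = piF rho.
Proof.
move=> Hs Hphi Hrho; apply: lfP => f /=.
under eq_bigr => p _ do rewrite Hphi lfE_sum.
under [RHS]eq_bigr => p _ do rewrite Hrho /=.
by rewrite (ccoassoc (tri_assoc Hs)).
Qed.

Lemma F_counit (X : cob C) (m : F X) (phi : {linear @chom K C X X -> F X}) :
  (forall f, phi f = ceps X f *: m) -> piF phi = m.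
Proof.
move=> H; apply: lfP => f /=.
under eq_bigr => p _ do rewrite H lfE_scale -lfZ.
by rewrite -lf_sum ccounit_r.
Qed.

Lemma F_linl X (k : K) (a1 a2 : A) (m : F X) :
  eactF (k *: a1 + a2) m = k *: eactF a1 m + eactF a2 m.
Proof.
apply: lfP => f /=.
have [_ H] := @epsi_bilinear _ _ _ psi X W _ _ (bil_mul m).
exact: H.
Qed.

Lemma F_linr X (k : K) (a : A) (m1 m2 : F X) :
  eactF a (k *: m1 + m2) = k *: eactF a m1 + eactF a m2.
Proof.
apply: lfP => f /=.
under eq_bigr => p _ do rewrite mulrDr -scalerAr.
by rewrite big_split /= scaler_sumr.
Qed.

Lemma F_one X (m : F X) : eactF 1 m = m.
Proof.
apply: lfP => f /=.
by rewrite -[RHS]mul1r; exact: (@epsi_one _ _ _ psi X W _ _ (bil_mul m) f).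
Qed.

Lemma F_mul X (a b : A) (m : F X) : eactF (a * b) m = eactF a (eactF b m).
Proof.
apply: lfP => f /=.
transitivity (\sum_(p <- epsi psi f a) \sum_(q <- epsi psi p.2 b) (p.1 * q.1) * m q.2);
  first exact: (@epsi_mul _ _ _ psi X W _ _ (bil_mul m) f a b).
apply: eq_bigr => p _; rewrite mulr_sumr; apply: eq_bigr => q _.
by rewrite mulrA.
Qed.

Lemma tri_act X Y (Phi : {linear @chom K C X Y -> F Y}) :
  trilinear3 (fun (a : A) (c1 : @chom K C Y W) (c2 : @chom K C X Y) => a * Phi c2 c1).
Proof.
split; [|split] => k u1 u2 v z.
- by rewrite mulrDl scalerAl.
- by rewrite lf_lin mulrDr scalerAr.
- by rewrite linearP lfE_add lfE_scale mulrDr scalerAr.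
Qed.

Lemma F_act (X Y : cob C) (a : A) (phi phi' : {linear @chom K C X Y -> F Y}) :
  (forall f, phi' f = \sum_(p <- epsi psi f a) eactF p.1 (phi p.2)) ->
  eactF a (piF phi) = piF phi'.
Proof.
move=> H; apply: lfP => f /=.
under eq_bigr => p _ do rewrite mulr_sumr.
under [RHS]eq_bigr => p _ do rewrite H lfE_sum /=.
exact: (@epsi_delta _ _ _ psi X Y W _ _ (tri_act phi)).
Qed.

Definition Fr : ectr psi :=
  @ECtr _ _ _ psi F piF eactF F_lin F_assoc F_counit F_linl F_linr F_one F_mul F_act.
End Free.

Section Gen.
Variables (K : fieldType) (C : coalgebra K) (A : algType K) (psi : entwining C A).
Variables (W : cob C) (M : ectr psi) (m : eM M W).

Lemma Hlin Y (phi : eM (Fr psi W) Y) (k : K) x y :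
  eact (phi (k *: x + y)) m = k *: eact (phi x) m + eact (phi y) m.
Proof. by rewrite lf_lin eact_linl. Qed.

Definition hfun Y (phi : eM (Fr psi W) Y) : eM M Y := epi (mkLin (@Hlin Y phi)).

Lemma hlin Y (k : K) (x y : eM (Fr psi W) Y) : hfun (k *: x + y) = k *: hfun x + hfun y.
Proof. by apply: epi_linear => f /=; rewrite eact_linl. Qed.

Definition hmap Y : {linear eM (Fr psi W) Y -> eM M Y} := mkLin (@hlin Y).

Lemma h_act Y (a : A) (phi : eM (Fr psi W) Y) : hmap Y (eact (e:=Fr psi W) a phi) = eact a (hmap Y phi).
Proof.
rewrite /= /hfun; symmetry; apply: epi_act => f /=.
rewrite eact_suml; apply: eq_bigr => p _; by rewrite eact_mul.
Qed.

Lemma h_pi (X Y : cob C) (phi : {linear @chom K C X Y -> eM (Fr psi W) Y})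
      (phi' : {linear @chom K C X Y -> eM M Y}) :
      (forall f, phi' f = hmap Y (phi f)) ->
      hmap X (epi phi) = epi phi'.
Proof.
move=> H; rewrite /= /hfun.
have sl : forall (k : K) h1 h2 g,
  (fun g0 => mkLin (@Hlin Y (phi g0))) (k *: h1 + h2) g =
   k *: (fun g0 => mkLin (@Hlin Y (phi g0))) h1 g + (fun g0 => mkLin (@Hlin Y (phi g0))) h2 g.
  by move=> k h1 h2 g /=; rewrite linearP /= eact_linl.
apply: (@epi_assoc _ _ _ _ M X Y W _ _ _ sl) => [f|h] /=.
  by rewrite eact_suml.
by rewrite H.
Qed.

Definition hom : ehom (Fr psi W) M := @EHom _ _ _ _ _ _ hmap h_act h_pi.

Program Definition unitF : eM (Fr psi W) W := @LFun _ _ _ (fun f => ceps W f *: (1 : A)) _.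
Next Obligation. by rewrite linearP scalerDl scalerA. Qed.

Lemma hom_unit : emap hom W unitF = m.
Proof.
rewrite /= /hfun; apply: epi_counit => f /=.
by rewrite -[_ *: 1]addr0 eact_linl eact0 addr0 eact_one.
Qed.
End Gen.

Theorem theorem3p10 (K : fieldType) (C : coalgebra K) (A : algType K)
  (psi : entwining C A) : has_set_of_generators psi.
Proof.
exists (cob C), (fun W => Fr psi W) => M N u v H X m.
by rewrite -(hom_unit m); apply: H.
Qed.
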